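(* Let $S$ be a monoid, $A_S$ a right $S$-act, and $A_1\subseteq A_2\subseteq\cdots\subseteq A_n=A$ subacts. Then $A_S$ is artinian (resp. noetherian, Rees artinian, Rees noetherian) if and only if $A_1$ and all Rees factor acts $A_{i+1}/A_i$, $1\le i\le n-1$, are artinian (resp. noetherian, Rees artinian, Rees noetherian).
   Context: For a subact $B\subseteq A$, the Rees factor act $A/B$ is the quotient of $A$ by the Rees congruence $(B\times B)\cup\Delta_A$. A right $S$-act is artinian (noetherian) if its lattice of congruences satisfies the descending (ascending) chain condition; Rees artinian (Rees noetherian) if its subacts satisfy the descending (ascending) chain condition. *)

(* Defs.v *)
From Stdlib Require Import Arith Lia ClassicalEpsilon FunctionalExtensionality
  PropExtensionality ProofIrrelevance.

Set Implicit Arguments.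

Record monoid := Monoid {
  mcar :> Type;
  mmul : mcar -> mcar -> mcar;
  mone : mcar;
  mmulA : forall x y z, mmul x (mmul y z) = mmul (mmul x y) z;
  mmul1l : forall x, mmul mone x = x;
  mmul1r : forall x, mmul x mone = x
}.

Record ract (M : monoid) := RAct {
  acar :> Type;
  act : acar -> M -> acar;
  act1 : forall a, act a (mone M) = a;
  actM : forall a s t, act (act a s) t = act a (mmul M s t)
}.
Arguments act {M} r a s.

Section Acts.
Variable M : monoid.

Definition is_congruence (A : ract M) (r : A -> A -> Prop) : Prop :=
  (forall a, r a a) /\ (forall a b, r a b -> r b a) /\
  (forall a b c, r a b -> r b c -> r a c) /\
  (forall a b s, r a b -> r (act A a s) (act A b s)).

Arguments is_congruence {A} r.

Record cong (A : ract M) := Cong { crel :> A -> A -> Prop; crelP : is_congruence crel }.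

(* Subacts (subsets closed under the action; possibly empty). *)
Definition is_subact (A : ract M) (P : A -> Prop) : Prop :=
  forall a s, P a -> P (act A a s).

Arguments is_subact {A} P.

Record subact (A : ract M) := Subact { spred :> A -> Prop; spredP : is_subact spred }.

Definition sub_car (A : ract M) (B : subact A) := {a : A | B a}.

Definition sub_act_op (A : ract M) (B : subact A) (x : sub_car B) (s : M) : sub_car B :=
  exist _ (act A (proj1_sig x) s) (spredP B _ s (proj2_sig x)).

Lemma sub_act_1 (A : ract M) (B : subact A) (x : sub_car B) : sub_act_op x (mone M) = x.
Proof.
  destruct x as [a Ha]; unfold sub_act_op; simpl.
  apply eq_sig_hprop; [intros; apply proof_irrelevance | simpl; apply act1].
Qed.

Lemma sub_act_M (A : ract M) (B : subact A) (x : sub_car B) s t :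
  sub_act_op (sub_act_op x s) t = sub_act_op x (mmul M s t).
Proof.
  destruct x as [a Ha]; unfold sub_act_op; simpl.
  apply eq_sig_hprop; [intros; apply proof_irrelevance | simpl; apply actM].
Qed.

Definition sub_act (A : ract M) (B : subact A) : ract M :=
  @RAct M (sub_car B) (@sub_act_op A B) (@sub_act_1 A B) (@sub_act_M A B).

(* Restriction of a subact B of A to a subact C of A (the set B ∩ C viewed
   inside the act C); when B ⊆ C this is B as a subact of C. *)
Definition restrict (A : ract M) (B C : subact A) : subact (sub_act C).
Proof.
  refine (@Subact (sub_act C) (fun x => B (proj1_sig x)) _).
  intros x s Hx. simpl. apply (spredP B). exact Hx.
Defined.

Definition qcar (A : ract M) (r : cong A) := {X : A -> Prop | exists a, X = r a}.

Definition qrep (A : ract M) (r : cong A) (X : qcar r) : A :=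
  proj1_sig (constructive_indefinite_description _ (proj2_sig X)).

Lemma qrepP (A : ract M) (r : cong A) (X : qcar r) : proj1_sig X = r (qrep X).
Proof. unfold qrep; destruct (constructive_indefinite_description _ _); auto. Qed.

Definition qclass (A : ract M) (r : cong A) (a : A) : qcar r :=
  exist _ (r a) (ex_intro _ a eq_refl).

Definition q_act_op (A : ract M) (r : cong A) (X : qcar r) (s : M) : qcar r :=
  qclass r (act A (qrep X) s).

Lemma qclass_eq (A : ract M) (r : cong A) a b : r a b -> r a = r b.
Proof.
  destruct (crelP r) as [Hr [Hs [Ht _]]]; intros Hab.
  apply functional_extensionality; intro c; apply propositional_extensionality.
  split; intros H; eauto.
Qed.

Lemma qeq (A : ract M) (r : cong A) (X Y : qcar r) : proj1_sig X = proj1_sig Y -> X = Y.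
Proof. intros; apply eq_sig_hprop; auto; intros; apply proof_irrelevance. Qed.

Lemma q_act_1 (A : ract M) (r : cong A) (X : qcar r) : q_act_op X (mone M) = X.
Proof.
  apply qeq; unfold q_act_op, qclass; simpl; rewrite act1, qrepP; reflexivity.
Qed.

Lemma q_act_M (A : ract M) (r : cong A) (X : qcar r) s t :
  q_act_op (q_act_op X s) t = q_act_op X (mmul M s t).
Proof.
  apply qeq; unfold q_act_op at 1 3, qclass; simpl.
  rewrite <- actM. apply eq_sym, qclass_eq.
  destruct (crelP r) as [Hr [Hs [Ht Hc]]]. apply Hc.
  set (Y := q_act_op X s).
  assert (E : proj1_sig Y = r (qrep Y)) by apply qrepP.
  unfold Y, q_act_op, qclass at 1 in E; simpl in E.
  rewrite E. apply Hr.
Qed.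

Definition quot_act (A : ract M) (r : cong A) : ract M :=
  @RAct M (qcar r) (@q_act_op A r) (@q_act_1 A r) (@q_act_M A r).

Definition rees_rel (A : ract M) (B : subact A) (a b : A) : Prop :=
  (B a /\ B b) \/ a = b.

Lemma rees_rel_cong (A : ract M) (B : subact A) : is_congruence (rees_rel B).
Proof.
  unfold rees_rel; repeat split.
  - intros; right; reflexivity.
  - intros a b [[] | ->]; [left | right]; auto.
  - intros a b c [[] | ->] [[] | ->]; auto.
  - intros a b s [[Ha Hb] | ->]; [left; split; apply (spredP B); auto | right; auto].
Qed.

Definition rees_cong (A : ract M) (B : subact A) : cong A := @Cong A (rees_rel B) (rees_rel_cong B).

Definition rees_factor (A : ract M) (B : subact A) : ract M := quot_act (rees_cong B).

Definition artinian (A : ract M) : Prop :=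
  forall c : nat -> A -> A -> Prop,
    (forall n, is_congruence (c n)) ->
    (forall n a b, c (S n) a b -> c n a b) ->
    exists N, forall m, N <= m -> forall a b, c m a b <-> c N a b.

Definition noetherian (A : ract M) : Prop :=
  forall c : nat -> A -> A -> Prop,
    (forall n, is_congruence (c n)) ->
    (forall n a b, c n a b -> c (S n) a b) ->
    exists N, forall m, N <= m -> forall a b, c m a b <-> c N a b.

Definition rees_artinian (A : ract M) : Prop :=
  forall c : nat -> A -> Prop,
    (forall n, is_subact (c n)) ->
    (forall n a, c (S n) a -> c n a) ->
    exists N, forall m, N <= m -> forall a, c m a <-> c N a.

Definition rees_noetherian (A : ract M) : Prop :=
  forall c : nat -> A -> Prop,
    (forall n, is_subact (c n)) ->
    (forall n a, c n a -> c (S n) a) ->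
    exists N, forall m, N <= m -> forall a, c m a <-> c N a.

End Acts.

(* Main.v *)
Require Import Defs.
From Stdlib Require Import Arith.
From Stdlib Require Import Setoid Lia Classical ProofIrrelevance.

Set Implicit Arguments.

Section Gen.
Variable M : monoid.

Definition step (d : bool) (X Y : Prop) : Prop := if d then (Y -> X) else (X -> Y).

Definition ccong (d : bool) (A : ract M) : Prop :=
  forall c : nat -> A -> A -> Prop,
    (forall n, is_congruence _ (c n)) ->
    (forall n a b, step d (c n a b) (c (S n) a b)) ->
    exists N, forall m, N <= m -> forall a b, c m a b <-> c N a b.

Definition crees (d : bool) (A : ract M) : Prop :=
  forall c : nat -> A -> Prop,
    (forall n, is_subact _ (c n)) ->
    (forall n a, step d (c n a) (c (S n) a)) ->
    exists N, forall m, N <= m -> forall a, c m a <-> c N a.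

Definition hom (A A' : ract M) (f : A -> A') := forall a s, f (act A a s) = act A' (f a) s.
Arguments hom {A A'} f.

Lemma sig_eq {T} (P : T -> Prop) (x y : sig P) : proj1_sig x = proj1_sig y -> x = y.
Proof.
  destruct x as [x hx], y as [y hy]; simpl; intros E; subst; f_equal; apply proof_irrelevance.
Qed.

Lemma mono_le d (T : Type) (c : nat -> T -> Prop)
  (H : forall n a, step d (c n a) (c (S n) a)) n m a : n <= m -> step d (c n a) (c m a).
Proof.
  intros Hl; induction Hl; [unfold step; destruct d; auto|].
  specialize (H m a); unfold step in *; destruct d; auto.
Qed.

Lemma ccong_inj d (A A' : ract M) (g : A' -> A) :
  hom g -> (forall x y, g x = g y -> x = y) -> ccong d A -> ccong d A'.
Proof.
  intros Hg Hi HA c Hc Hm.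
  set (ch := fun n (x y : A) => x = y \/ exists x' y', g x' = x /\ g y' = y /\ c n x' y').
  assert (Hch : forall n, is_congruence _ (ch n)).
  { intro n; destruct (Hc n) as [Rf [Sy [Tr Co]]]; unfold ch; repeat split.
    - intros; left; reflexivity.
    - intros x y [->|[x' [y' [E1 [E2 H]]]]]; [left; reflexivity| right; exists y', x'; auto].
    - intros x y z [->|[x' [y' [E1 [E2 H]]]]] [->|[y'' [z' [E3 [E4 H']]]]].
      + left; reflexivity.
      + right; exists y'', z'; auto.
      + right; exists x', y'; auto.
      + right; exists x', z'; repeat split; auto.
        rewrite <- E3 in E2. apply Hi in E2. subst. eauto.
    - intros x y s [->|[x' [y' [E1 [E2 H]]]]]; [left; reflexivity|].
      right; exists (act A' x' s), (act A' y' s); subst; repeat split; auto; apply Hg. }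
  assert (Hmono : forall n a b, step d (ch n a b) (ch (S n) a b)).
  { intros n a b; specialize (Hm n); unfold step in *; destruct d; unfold ch;
      (intros [->|[x' [y' [E1 [E2 H]]]]]; [left; auto | right; exists x', y'; auto]). }
  destruct (HA ch Hch Hmono) as [N HN]; exists N; intros m Hm' x y.
  assert (key : forall n x y, ch n (g x) (g y) <-> c n x y).
  { intros n x0 y0; unfold ch; split.
    - intros [E|[x' [y' [E1 [E2 H]]]]].
      + apply Hi in E; subst; destruct (Hc n) as [Rf _]; apply Rf.
      + apply Hi in E1; apply Hi in E2; subst; auto.
    - intros; right; exists x0, y0; auto. }
  rewrite <- !key; apply HN; auto.
Qed.

Lemma crees_inj d (A A' : ract M) (g : A' -> A) :
  hom g -> (forall x y, g x = g y -> x = y) -> crees d A -> crees d A'.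
Proof.
  intros Hg Hi HA c Hc Hm.
  set (ch := fun n (a : A) => exists x, g x = a /\ c n x).
  assert (Hch : forall n, is_subact _ (ch n)).
  { intros n a s [x [<- H]]; exists (act A' x s); split; [apply Hg | apply Hc; auto]. }
  assert (Hmono : forall n a, step d (ch n a) (ch (S n) a)).
  { intros n a; specialize (Hm n); unfold step in *; destruct d; unfold ch;
      intros [x [E H]]; exists x; auto. }
  destruct (HA ch Hch Hmono) as [N HN]; exists N; intros m Hm' x.
  assert (key : forall n x, ch n (g x) <-> c n x).
  { intros n x0; unfold ch; split.
    - intros [x' [E H]]; apply Hi in E; subst; auto.
    - intros; exists x0; auto. }
  rewrite <- !key; apply HN; auto.
Qed.

Lemma ccong_surj d (A A' : ract M) (f : A -> A') :
  hom f -> (forall y, exists x, f x = y) -> ccong d A -> ccong d A'.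
Proof.
  intros Hf Hs HA c Hc Hm.
  set (ch := fun n (a b : A) => c n (f a) (f b)).
  assert (Hch : forall n, is_congruence _ (ch n)).
  { intro n; destruct (Hc n) as [Rf [Sy [Tr Co]]]; unfold ch; repeat split; eauto.
    intros a b s H; rewrite !Hf; auto. }
  assert (Hmono : forall n a b, step d (ch n a b) (ch (S n) a b)).
  { intros n a b; apply Hm. }
  destruct (HA ch Hch Hmono) as [N HN]; exists N; intros m Hm' y z.
  destruct (Hs y) as [a <-], (Hs z) as [b <-]; apply (HN m Hm').
Qed.

Lemma crees_surj d (A A' : ract M) (f : A -> A') :
  hom f -> (forall y, exists x, f x = y) -> crees d A -> crees d A'.
Proof.
  intros Hf Hs HA c Hc Hm.
  set (ch := fun n (a : A) => c n (f a)).
  assert (Hch : forall n, is_subact _ (ch n)).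
  { intros n a s H; unfold ch in *; rewrite Hf; apply Hc; auto. }
  assert (Hmono : forall n a, step d (ch n a) (ch (S n) a)).
  { intros n a; apply Hm. }
  destruct (HA ch Hch Hmono) as [N HN]; exists N; intros m Hm' y.
  destruct (Hs y) as [a <-]; apply (HN m Hm').
Qed.

Lemma Rq (A : ract M) (B : subact A) (a : A) :
  rees_rel B a (qrep (qclass (rees_cong B) a)).
Proof.
  set (X := qclass (rees_cong B) a).
  pose proof (f_equal (fun F => F (qrep X)) (qrepP X)) as E. simpl in E.
  change (rees_rel B a (qrep X)). rewrite E. right; reflexivity.
Qed.

Lemma qclass_hom (A : ract M) (B : subact A) : hom (A' := rees_factor B) (qclass (rees_cong B)).
Proof.
  intros a s. simpl. unfold q_act_op. apply qeq; apply (qclass_eq (rees_cong B)).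
  destruct (rees_rel_cong B) as [_ [_ [_ Co]]]. apply Co. apply Rq.
Qed.

Lemma qclass_surj (A : ract M) (B : subact A) (y : rees_factor B) :
  exists x, qclass (rees_cong B) x = y.
Proof.
  exists (qrep y). apply qeq. symmetry. exact (qrepP y).
Qed.

Definition Jn (A : ract M) (B : subact A) (c : A -> A -> Prop) (a b : A) : Prop :=
  c a b \/ exists b1 b2, B b1 /\ B b2 /\ c a b1 /\ c b b2.

Lemma J_cong (A : ract M) (B : subact A) c : is_congruence _ c -> is_congruence _ (Jn B c).
Proof.
  intros [Rf [Sy [Tr Co]]]; unfold Jn; repeat split.
  - intros; left; auto.
  - intros a b [H|[b1 [b2 [H1 [H2 [H3 H4]]]]]]; [left; auto | right; exists b2, b1; auto].
  - intros a b c' [H|[b1 [b2 [H1 [H2 [H3 H4]]]]]] [H'|[b3 [b4 [H5 [H6 [H7 H8]]]]]].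
    + left; eauto.
    + right; exists b3, b4; repeat split; eauto.
    + right; exists b1, b2; repeat split; eauto.
    + right; exists b1, b4; repeat split; eauto.
  - intros a b s [H|[b1 [b2 [H1 [H2 [H3 H4]]]]]]; [left; auto|].
    right; exists (act A b1 s), (act A b2 s); repeat split; auto; apply (spredP B); auto.
Qed.

Lemma key_lemma (A : ract M) (B : subact A) (s t : A -> A -> Prop) :
  is_congruence _ s -> is_congruence _ t -> (forall a b, s a b -> t a b) ->
  (forall a b, B a -> B b -> t a b -> s a b) ->
  (forall a b, Jn B t a b -> Jn B s a b) -> forall a b, t a b -> s a b.
Proof.
  intros [Rf [Sy [Tr Co]]] [Rf' [Sy' [Tr' Co']]] Hst HB HJ a b H.
  destruct (HJ a b (or_introl H)) as [H'|[b1 [b2 [H1 [H2 [H3 H4]]]]]]; auto.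
  assert (s b1 b2).
  { apply HB; auto. apply Tr' with a; [apply Sy'; auto|]. apply Tr' with b; auto. }
  eauto.
Qed.

Lemma ccong_ext d (A : ract M) (B : subact A) :
  ccong d (sub_act B) -> ccong d (rees_factor B) -> ccong d A.
Proof.
  intros HB HF c Hc Hm.
  set (cb := fun n (x y : sub_act B) => c n (proj1_sig x) (proj1_sig y)).
  assert (Hcb : forall n, is_congruence _ (cb n)).
  { intro n; destruct (Hc n) as [Rf [Sy [Tr Co]]]; unfold cb; repeat split; eauto.
    intros x y s H; simpl; apply Co; auto. }
  assert (Hmb : forall n a b, step d (cb n a b) (cb (S n) a b)).
  { intros; apply Hm. }
  destruct (HB cb Hcb Hmb) as [N1 H1].
  set (cf := fun n (X Y : rees_factor B) => Jn B (c n) (qrep X) (qrep Y)).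
  assert (Jrees : forall n a b, rees_rel B a b -> Jn B (c n) a b).
  { intros n a b [[Ha Hb]|E]; destruct (Hc n) as [Rf _].
    - right; exists a, b; auto.
    - subst; left; auto. }
  assert (Hcf : forall n, is_congruence _ (cf n)).
  { intro n; destruct (J_cong B (Hc n)) as [Rf [Sy [Tr Co]]]; unfold cf; repeat split; eauto.
    intros X Y s H. simpl. unfold q_act_op.
    apply Tr with (act A (qrep X) s); [apply Sy; apply Jrees; apply Rq|].
    apply Tr with (act A (qrep Y) s); [apply Co; auto| apply Jrees; apply Rq]. }
  assert (Hmf : forall n a b, step d (cf n a b) (cf (S n) a b)).
  { intros n a b; specialize (Hm n); unfold step in *; destruct d; unfold cf, Jn;
      (intros [H|[b1 [b2 [H1' [H2' [H3' H4']]]]]]; [left; auto| right; exists b1, b2; auto]). }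
  destruct (HF cf Hcf Hmf) as [N2 H2].
  exists (max N1 N2); intros m Hm' a b.
  assert (Jeq : forall n a b, Jn B (c n) a b <-> cf n (qclass (rees_cong B) a) (qclass (rees_cong B) b)).
  { intros n x y; destruct (J_cong B (Hc n)) as [Rf [Sy [Tr Co]]]; unfold cf; split; intros H.
    - apply Tr with x; [apply Sy, Jrees, Rq|]. apply Tr with y; auto. apply Jrees, Rq.
    - apply Tr with (qrep (qclass (rees_cong B) x)); [apply Jrees, Rq|].
      apply Tr with (qrep (qclass (rees_cong B) y)); auto. apply Sy, Jrees, Rq. }
  assert (HJ : forall x y, Jn B (c m) x y <-> Jn B (c (max N1 N2)) x y).
  { intros x y; rewrite !Jeq. rewrite (H2 m), (H2 (max N1 N2)); try lia. tauto. }
  assert (HBe : forall x y, B x -> B y -> (c m x y <-> c (max N1 N2) x y)).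
  { intros x y hx hy.
    pose proof (H1 m ltac:(lia) (exist _ x hx) (exist _ y hy)) as E1.
    pose proof (H1 (max N1 N2) ltac:(lia) (exist _ x hx) (exist _ y hy)) as E2.
    unfold cb in E1, E2; simpl in E1, E2. tauto. }
  assert (Hle : forall x y, step d (c (max N1 N2) x y) (c m x y)).
  { intros x y; apply (@mono_le d (A * A)%type (fun n (p : A * A) => c n (fst p) (snd p))) with (a := (x, y)).
    - intros n p; apply Hm.
    - lia. }
  unfold step in Hle; destruct d; split; intros H; auto.
  - apply (key_lemma (B := B) (Hc m) (Hc (max N1 N2))); auto.
    + intros; apply HBe; auto.
    + intros; apply HJ; auto.
  - apply (key_lemma (B := B) (Hc (max N1 N2)) (Hc m)); auto.
    + intros; apply HBe; auto.
    + intros; apply HJ; auto.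
Qed.

Lemma crees_ext d (A : ract M) (B : subact A) :
  crees d (sub_act B) -> crees d (rees_factor B) -> crees d A.
Proof.
  intros HB HF c Hc Hm.
  set (cb := fun n (x : sub_act B) => c n (proj1_sig x)).
  assert (Hcb : forall n, is_subact _ (cb n)).
  { intros n x s H; unfold cb; simpl; apply Hc; auto. }
  assert (Hmb : forall n a, step d (cb n a) (cb (S n) a)).
  { intros; apply Hm. }
  destruct (HB cb Hcb Hmb) as [N1 H1].
  set (cf := fun n (X : rees_factor B) => c n (qrep X) \/ B (qrep X)).
  assert (Hcf : forall n, is_subact _ (cf n)).
  { intros n X s H. unfold cf. simpl. unfold q_act_op.
    destruct (Rq B (act A (qrep X) s)) as [[_ Hr]|E]; [right; exact Hr|].
    rewrite <- E. destruct H as [H|H]; [left; apply Hc; auto | right; apply (spredP B); auto]. }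
  assert (Hmf : forall n a, step d (cf n a) (cf (S n) a)).
  { intros n a; specialize (Hm n); unfold step in *; destruct d; unfold cf;
      intros [H|H]; auto. }
  destruct (HF cf Hcf Hmf) as [N2 H2].
  exists (max N1 N2); intros m Hm' a.
  destruct (classic (B a)) as [hb|nb].
  - pose proof (H1 m ltac:(lia) (exist _ a hb)) as E1.
    pose proof (H1 (max N1 N2) ltac:(lia) (exist _ a hb)) as E2.
    unfold cb in E1, E2; simpl in E1, E2. tauto.
  - destruct (Rq B a) as [[Ha _]|E]; [contradiction|].
    pose proof (H2 m ltac:(lia) (qclass (rees_cong B) a)) as E1.
    pose proof (H2 (max N1 N2) ltac:(lia) (qclass (rees_cong B) a)) as E2.
    unfold cf in E1, E2; rewrite <- E in E1, E2. tauto.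
Qed.

Definition Good (P : ract M -> Prop) : Prop :=
  (forall (A A' : ract M) (g : A' -> A), hom g -> (forall x y, g x = g y -> x = y) -> P A -> P A') /\
  (forall (A A' : ract M) (f : A -> A'), hom f -> (forall y, exists x, f x = y) -> P A -> P A') /\
  (forall (A : ract M) (B : subact A), P (sub_act B) -> P (rees_factor B) -> P A).

Lemma good_ccong d : Good (ccong d).
Proof.
  split; [|split].
  - intros; eapply ccong_inj; eauto.
  - intros; eapply ccong_surj; eauto.
  - intros; eapply ccong_ext; eauto.
Qed.

Lemma good_crees d : Good (crees d).
Proof.
  split; [|split].
  - intros; eapply crees_inj; eauto.
  - intros; eapply crees_surj; eauto.
  - intros; eapply crees_ext; eauto.
Qed.

Lemma good_proj P (HP : Good P) (A : ract M) (B : subact A) : P A -> P (sub_act B).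
Proof.
  destruct HP as [HE _]. apply HE with (g := fun x : sub_act B => proj1_sig x).
  - intros x s; reflexivity.
  - intros x y E; apply sig_eq; auto.
Qed.

Lemma step_lemma P (HP : Good P) (A : ract M) (B C : subact A) (Hinc : forall a, B a -> C a) :
  P (sub_act C) <-> P (sub_act B) /\ P (rees_factor (restrict B C)).
Proof.
  pose proof HP as [HE [HQ HX]].
  split.
  - intros H; split.
    + apply good_proj with (B := restrict B C) in H; auto.
      apply HE with (g := fun x : sub_act B =>
        (exist _ (exist _ (proj1_sig x) (Hinc _ (proj2_sig x))) (proj2_sig x)
          : sub_act (restrict B C))) in H; auto.
      * intros x s; apply sig_eq; simpl; apply sig_eq; reflexivity.
      * intros x y E. apply (f_equal (fun z => proj1_sig (proj1_sig z))) in E.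
        simpl in E. apply sig_eq; auto.
    + exact (HQ _ (rees_factor (restrict B C)) (qclass (rees_cong (restrict B C)))
        (qclass_hom _) (@qclass_surj _ _) H).
  - intros [H1 H2]. apply (HX _ (restrict B C)); auto.
    apply HE with (g := fun y : sub_act (restrict B C) =>
      (exist _ (proj1_sig (proj1_sig y)) (proj2_sig y) : sub_act B)) in H1; auto.
    + intros x s; apply sig_eq; reflexivity.
    + intros x y E. apply (f_equal (fun z => proj1_sig z)) in E. simpl in E.
      apply sig_eq; apply sig_eq; auto.
Qed.

Lemma good_main P (HP : Good P) (A : ract M) (n : nat) (Af : nat -> subact A) :
  1 <= n ->
  (forall i, 1 <= i < n -> forall a, Af i a -> Af (S i) a) ->
  (forall a, Af n a) ->
  (P A <->
     (P (sub_act (Af 1)) /\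
      forall i, 1 <= i <= n - 1 -> P (rees_factor (restrict (Af i) (Af (S i)))))).
Proof.
  intros Hn Hinc Hfull.
  assert (Hk : forall k, 1 <= k <= n -> (P (sub_act (Af k)) <->
     (P (sub_act (Af 1)) /\
      forall i, 1 <= i <= k - 1 -> P (rees_factor (restrict (Af i) (Af (S i))))))).
  { induction k; intros Hkn; [lia|].
    destruct k as [|k].
    - split; [intros H; split; auto; intros; lia | tauto].
    - rewrite (step_lemma HP (Af (S k)) (Af (S (S k)))); [|apply Hinc; lia].
      rewrite IHk; [|lia]. split.
      + intros [[H1 H2] H3]; split; auto. intros i Hi.
        destruct (Nat.eq_dec i (S k)); [subst; auto| apply H2; lia].
      + intros [H1 H2]; split; [split; auto; intros; apply H2; lia| apply H2; lia]. }
  rewrite <- (Hk n); [|lia]. split.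
  - apply good_proj; auto.
  - destruct HP as [HE _]. apply HE with (g := fun a : A => (exist _ a (Hfull a) : sub_act (Af n))).
    + intros a s; apply sig_eq; reflexivity.
    + intros x y E; apply (f_equal (fun z => proj1_sig z)) in E; auto.
Qed.

End Gen.

Theorem mainTheorem6 (M : monoid) (A : ract M) (n : nat) (Af : nat -> subact A) :
  1 <= n ->
  (forall i, 1 <= i < n -> forall a, Af i a -> Af (S i) a) ->
  (forall a, Af n a) ->
  forall P : forall A' : ract M, Prop,
    P = @artinian M \/ P = @noetherian M \/ P = @rees_artinian M \/ P = @rees_noetherian M ->
    (P A <->
     (P (sub_act (Af 1)) /\
      forall i, 1 <= i <= n - 1 -> P (rees_factor (restrict (Af i) (Af (S i)))))).
Proof.
  intros Hn Hinc Hfull P HP.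
  apply good_main; auto.
  destruct HP as [ -> | [ -> | [ -> | -> ] ] ].
  - exact (good_ccong M true).
  - exact (good_ccong M false).
  - exact (good_crees M true).
  - exact (good_crees M false).
Qed.
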